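(* Let $C_0>0$. There exist constants $c,C>0$ depending only on $C_0$ such that the following holds. Let $n>2f\ge0$, $\mathcal{B}\subset[n]$ with $|\mathcal{B}|=f$, $\mathcal{H}=[n]\setminus\mathcal{B}$, and let honest losses $\mathcal{L}_i$, $i\in\mathcal{H}$, be differentiable and satisfy $(G,0)$-heterogeneity, i.e. $\frac{1}{|\mathcal{H}|}\sum_{i\in\mathcal{H}}\|\nabla\mathcal{L}_i(x)-\nabla\mathcal{L}_{\mathcal{H}}(x)\|^2\le G^2$ for all $x$. Assume $\mathcal{L}_{\mathcal{H}}=\frac1{|\mathcal{H}|}\sum_{i\in\mathcal{H}}\mathcal{L}_i$ is $\mu$-strongly convex and $L$-smooth, with minimizer $x^*$, and set $\kappa=L/\mu$. Let $F$ be an $(f,\nu)$-robust aggregation rule with $\nu\le C_0\frac{f}{n-2f}$. Run the fast gradient method (see context) where at each iterate $x_k$ the oracle $g(x_k)$ is $F(g_1,\dots,g_n)$ with $g_i=\nabla\mathcal{L}_i(x_k)$ for $i\in\mathcal{H}$ and $g_i$ arbitrary for $i\in\mathcal{B}$. Then for every $\varepsilon>0$ and every $k\ge c\sqrt{\kappa}\,\big(1+\log_+\big(L\|x_0-x^*\|^2/\varepsilon\big)\big)$, $$\mathcal{L}_{\mathcal{H}}(y_k)-\mathcal{L}_{\mathcal{H}}(x^* )\le \varepsilon+C\,\frac{\sqrt{\kappa}}{\mu}\,\frac{f}{n-2f}\,G^2 .$$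
   Context: $(f,\nu)$-robust aggregation rule: a map $F:\mathbb{R}^{d\times n}\to\mathbb{R}^d$ such that for all $x_1,\dots,x_n$ and every $S\subset[n]$ with $|S|=n-f$, $\|F(x_1,\dots,x_n)-\bar x_S\|^2\le \nu\frac{1}{|S|}\sum_{i\in S}\|x_i-\bar x_S\|^2$, $\bar x_S=\frac{1}{|S|}\sum_{i\in S}x_i$. Fast gradient method (with $\tilde L=2L$, $\tilde\mu=\mu/2$): $\gamma_0=1$, $\Gamma_k=\sum_{i=0}^k\gamma_i$, $\gamma_{k+1}>0$ defined by $2L+\frac{\mu}{2}\Gamma_k=\frac{2L\gamma_{k+1}^2}{\Gamma_{k+1}}$, $\tau_k=\gamma_{k+1}/\Gamma_{k+1}$. For $k\ge0$: $y_k=x_k-\frac1{2L}g(x_k)$; $z_k=\arg\min_x\{L\|x-x_0\|^2+\sum_{i=0}^k\gamma_i[\langle g(x_i),x-x_i\rangle+\frac{\mu}{4}\|x-x_i\|^2]\}$; $x_{k+1}=(1-\tau_k)y_k+\tau_kz_k$. $\log_+(t)=\max(\log t,0)$. *)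

(* Defs.v *)
From HB Require Import structures.
From mathcomp Require Import all_boot all_order all_algebra.
From mathcomp Require Import all_classical all_reals all_analysis.
Unset Printing Implicit Defensive.
Import Order.TTheory GRing.Theory Num.Theory.
Import numFieldNormedType.Exports.
Local Open Scope ring_scope.

Definition dotv {R : realType} {d : nat} (u v : 'rV[R]_d) : R :=
  \sum_(j < d) u 0 j * v 0 j.
Definition norm2 {R : realType} {d : nat} (u : 'rV[R]_d) : R := dotv u u.
Definition enorm {R : realType} {d : nat} (u : 'rV[R]_d) : R := Num.sqrt (norm2 u).

Definition logp {R : realType} (t : R) : R := Num.max (ln t) 0.

Definition is_gradient {R : realType} {d : nat}
  (f : 'rV[R]_d -> R) (gf : 'rV[R]_d -> 'rV[R]_d) : Prop :=
  forall x, differentiable f x /\ forall v, 'd f x v = dotv (gf x) v.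

Definition strongly_convex {R : realType} {d : nat} (mu : R) (f : 'rV[R]_d -> R) : Prop :=
  forall x y (t : R), 0 <= t -> t <= 1 ->
    f (t *: x + (1 - t) *: y) <=
      t * f x + (1 - t) * f y - mu / 2 * t * (1 - t) * norm2 (x - y).

Definition Lsmooth {R : realType} {d : nat} (L : R) (f : 'rV[R]_d -> R) : Prop :=
  exists gf, is_gradient f gf /\
    forall x y, enorm (gf x - gf y) <= L * enorm (x - y).

Definition avgS {R : realType} {d n : nat} (S : {set 'I_n}) (v : 'I_n -> 'rV[R]_d) : 'rV[R]_d :=
  (#|S|%:R)^-1 *: \sum_(i in S) v i.

Definition robust_agg {R : realType} {d : nat} (n f : nat) (nu : R)
  (F : ('I_n -> 'rV[R]_d) -> 'rV[R]_d) : Prop :=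
  forall (v : 'I_n -> 'rV[R]_d) (S : {set 'I_n}), #|S| = (n - f)%N ->
    norm2 (F v - avgS S v) <=
      nu * ((#|S|%:R)^-1 * \sum_(i in S) norm2 (v i - avgS S v)).

(* Main.v *)
Require Import Defs.
From HB Require Import structures.
From mathcomp Require Import all_boot all_order all_algebra.
From mathcomp Require Import all_classical all_reals all_analysis.
From mathcomp Require Import ring lra.
Import Order.TTheory GRing.Theory Num.Theory.
Import numFieldNormedType.Exports.
Local Open Scope ring_scope.
Local Open Scope classical_set_scope.
Section Dot.
Context {R : realType} {d : nat}.
Implicit Types (u v w : 'rV[R]_d) (a b : R).

Lemma dotvC u v : dotv u v = dotv v u.
Proof. by apply: eq_bigr => j _; rewrite mulrC. Qed.
Lemma dotvDl u v w : dotv (u + v) w = dotv u w + dotv v w.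
Proof. by rewrite /dotv -big_split; apply: eq_bigr => j _; rewrite !mxE mulrDl. Qed.
Lemma dotvZl a u w : dotv (a *: u) w = a * dotv u w.
Proof. by rewrite /dotv mulr_sumr; apply: eq_bigr => j _; rewrite !mxE mulrA. Qed.
Lemma dotvNl u w : dotv (- u) w = - dotv u w.
Proof. by rewrite /dotv -sumrN; apply: eq_bigr => j _; rewrite !mxE mulNr. Qed.
Lemma dotv0l w : dotv 0 w = 0.
Proof. by rewrite /dotv big1 // => j _; rewrite mxE mul0r. Qed.
Lemma dotvBl u v w : dotv (u - v) w = dotv u w - dotv v w.
Proof. by rewrite dotvDl dotvNl. Qed.
Lemma dotvDr u v w : dotv w (u + v) = dotv w u + dotv w v.
Proof. by rewrite dotvC dotvDl !(dotvC w). Qed.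
Lemma dotvZr a u w : dotv w (a *: u) = a * dotv w u.
Proof. by rewrite dotvC dotvZl dotvC. Qed.
Lemma dotvNr u w : dotv w (- u) = - dotv w u.
Proof. by rewrite dotvC dotvNl dotvC. Qed.
Lemma dotvBr u v w : dotv w (u - v) = dotv w u - dotv w v.
Proof. by rewrite dotvDr dotvNr. Qed.
Lemma dotv0r w : dotv w 0 = 0.
Proof. by rewrite dotvC dotv0l. Qed.
Lemma norm2_ge0 u : 0 <= norm2 u.
Proof. by apply: sumr_ge0 => j _; rewrite -expr2 sqr_ge0. Qed.
Lemma norm2_eq0 u : norm2 u = 0 -> u = 0.
Proof.
move=> h; apply/rowP => j; rewrite mxE.
have /psumr_eq0P P := h.
have := P (fun j _ => (ltac:(by rewrite -expr2 sqr_ge0))) j isT.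
by move/eqP; rewrite mulf_eq0 orbb => /eqP.
Qed.
Lemma norm2E u : norm2 u = dotv u u. Proof. by []. Qed.
Lemma norm2N u : norm2 (- u) = norm2 u.
Proof. by rewrite /norm2 dotvNl dotvNr opprK. Qed.
Lemma norm2B u v : norm2 (u - v) = norm2 v + norm2 u - 2 * dotv u v.
Proof. rewrite /norm2 dotvBl !dotvBr (dotvC v u); ring. Qed.
Lemma norm2D u v : norm2 (u + v) = norm2 u + norm2 v + 2 * dotv u v.
Proof. rewrite /norm2 dotvDl !dotvDr (dotvC v u); ring. Qed.
Lemma norm2Z a u : norm2 (a *: u) = a ^+ 2 * norm2 u.
Proof. rewrite /norm2 dotvZl dotvZr; ring. Qed.
Lemma norm2_sym u v : norm2 (u - v) = norm2 (v - u).
Proof. by rewrite -norm2N opprB. Qed.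
Lemma dotv_young a u v : 0 < a -> dotv u v <= a * norm2 v + norm2 u / (4 * a).
Proof.
move=> a0; have := norm2_ge0 (u - (2 * a) *: v).
rewrite norm2B norm2Z dotvZr => H.
have : 0 <= (norm2 u + (2 * a) ^+ 2 * norm2 v - 2 * (2 * a * dotv u v)) / (4 * a).
  by apply: divr_ge0; lra.
set N := norm2 u; set V := norm2 v; set D := dotv u v.
have -> : (N + (2 * a) ^+ 2 * V - 2 * (2 * a * D)) / (4 * a) = N / (4 * a) + a * V - D.
  by field; rewrite lt0r_neq0.
lra.
Qed.
End Dot.
Lemma dirder_le (R : realType) (d : nat) (f : 'rV[R]_d -> R) (x h : 'rV[R]_d) (M : R) :
  differentiable f x ->
  (forall t : R, 0 < t -> t <= 1 -> t^-1 * (f (t *: h + x) - f x) <= M) ->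
  'd f x h <= M.
Proof.
move=> df hM; rewrite -deriveE //.
have dv := @diff_derivable _ _ _ f x h df.
have cv : (fun t : R => t^-1 *: ((f \o shift x) (t *: h) - f x)) @ 0^'+ --> 'D_h f x.
  by apply: cvg_dnbhs_at_right; apply: dv.
apply: (cvgr_to_le cv).
near=> t.
have t0 : 0 < t by near: t; exact: nbhs_right_gt.
have t1 : t <= 1 by near: t; exact: nbhs_right_le.
by have := hM t t0 t1; rewrite /= addrC.
Unshelve. all: by end_near. Qed.
Local Close Scope classical_set_scope.

Lemma arch1 (R : realType) (A B C : R) :
  0 <= C -> (forall t : R, 0 < t -> t <= 1 -> A <= B + t * C) -> A <= B.
Proof.
move=> C0 H; rewrite leNgt; apply/negP => AB.
have p : 0 < A - B by lra.
have := H ((A - B) / (A - B + C)).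
have q : 0 < A - B + C by lra.
rewrite divr_gt0 // ler_pdivrMr // mul1r => /(_ isT).
have -> : (A - B) / (A - B + C) * C = (A - B) * (C / (A - B + C)) by rewrite mulrAC mulrA.
move=> /(_ ltac:(lra)).
have : C / (A - B + C) < 1 by rewrite ltr_pdivrMr // mul1r; lra.
move=> h1 h2.
have : (A - B) * (C / (A - B + C)) < (A - B) by rewrite -[X in _ < X]mulr1 ltr_pM2l.
lra.
Qed.

Lemma arch2 (R : realType) (X A B : R) :
  0 <= B -> (forall N : nat, (0 < N)%N -> X <= A + B / N%:R) -> X <= A.
Proof.
move=> B0 H; rewrite leNgt; apply/negP => XA.
have p : 0 < X - A by lra.
set N := (Num.Def.trunc (B / (X - A))).+1.
have hN := truncnS_gt (B / (X - A)).
have N0 : (0 : R) < N%:R by rewrite ltr0n.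
have := H N isT.
have : B / N%:R < X - A.
  by rewrite ltr_pdivrMr // mulrC -ltr_pdivrMr.
lra.
Qed.

Section Grad.
Variables (R : realType) (d : nat) (f : 'rV[R]_d -> R) (gf : 'rV[R]_d -> 'rV[R]_d).
Hypothesis hg : is_gradient f gf.

Lemma lin_comb (x y : 'rV[R]_d) (t : R) : t *: (y - x) + x = t *: y + (1 - t) *: x.
Proof. by rewrite scalerBr scalerBl scale1r -addrA [- _ + x]addrC. Qed.

Lemma grad_convex (mu : R) : 0 <= mu -> strongly_convex mu f ->
  forall x y, dotv (gf x) (y - x) <= f y - f x.
Proof.
move=> mu0 sc x y; have [df dd] := hg x.
rewrite -dd; apply: dirder_le => // t t0 t1.
rewrite lin_comb.
have := sc y x t (ltW t0) t1.
have : 0 <= mu / 2 * t * (1 - t) * norm2 (y - x).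
  by rewrite !mulr_ge0 ?norm2_ge0 // ?divr_ge0 // ?subr_ge0 // ltW.
move=> h1 h2.
have h3 : f (t *: y + (1 - t) *: x) - f x <= t * (f y - f x) by lra.
by rewrite mulrC ler_pdivrMr // mulrC.
Qed.

Lemma grad_sc (mu : R) : 0 <= mu -> strongly_convex mu f ->
  forall x y, f x + dotv (gf x) (y - x) + mu / 2 * norm2 (y - x) <= f y.
Proof.
move=> mu0 sc x y.
suff : dotv (gf x) (y - x) <= f y - f x - mu / 2 * norm2 (y - x) by lra.
apply: (@arch1 R _ _ (mu / 2 * norm2 (y - x))).
  by rewrite mulr_ge0 ?norm2_ge0 // divr_ge0.
move=> t t0 t1.
have c1 := @grad_convex mu mu0 sc x (t *: (y - x) + x).
rewrite addrK dotvZr lin_comb in c1.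
have := sc y x t (ltW t0) t1.
move=> h2.
have E : t * (f y - f x - mu / 2 * norm2 (y - x) + t * (mu / 2 * norm2 (y - x))) = t * f y + (1 - t) * f x - mu / 2 * t * (1 - t) * norm2 (y - x) - f x by ring.
rewrite -(ler_pM2l t0) E; lra.

Qed.

Lemma lip_sq (L : R) (c e : 'rV[R]_d) : 0 < L ->
  enorm c <= L * enorm e -> norm2 c <= L ^+ 2 * norm2 e.
Proof.
move=> L0; rewrite /enorm => h.
have p0 := sqrtr_ge0 (norm2 c); have q0 := sqrtr_ge0 (norm2 e).
have e1 := sqr_sqrtr (norm2_ge0 c); have e2 := sqr_sqrtr (norm2_ge0 e).
rewrite -e1 -e2.
set p := Num.sqrt (norm2 c) in h p0 e1 *; set q := Num.sqrt (norm2 e) in h q0 e2 *.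
have : 0 <= L * q by rewrite mulr_ge0 // ltW.
nra.
Qed.

Lemma descent (mu L : R) : 0 <= mu -> strongly_convex mu f -> 0 < L ->
  (forall x y, enorm (gf x - gf y) <= L * enorm (x - y)) ->
  forall x y, f y <= f x + dotv (gf x) (y - x) + L / 2 * norm2 (y - x).
Proof.
move=> mu0 sc L0 lip x y.
set h := y - x; set N2 := norm2 h; set D := dotv (gf x) h.
have N20 : 0 <= N2 by exact: norm2_ge0.
apply: (@arch2 R _ _ (L / 2 * N2)); first by rewrite mulr_ge0 // divr_ge0 // ltW.
move=> N N0.
set n := (N%:R : R).
have n0 : 0 < n by rewrite ltr0n.
pose p := fun m : nat => x + (m%:R / n) *: h.
have step : forall m, (m <= N)%N ->
   f (p m) - f x <= m%:R / n * D + L * N2 * (m%:R * (m%:R + 1)) / (2 * n ^+ 2).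
  elim => [|m IH] hm.
    by rewrite /p !mul0r scale0r addr0 subrr add0r mulr0 mul0r.
  have IH' := IH (ltnW hm).
  have c1 := @grad_convex mu mu0 sc (p m.+1) (p m).
  have E1 : p m - p m.+1 = (- n^-1) *: h.
    rewrite /p opprD addrACA subrr add0r -scalerBl; congr (_ *: _).
    by rewrite -mulrBl -[m.+1]addn1 natrD; field; rewrite -/n lt0r_neq0.
  have E2 : p m.+1 - x = (m.+1%:R / n) *: h by rewrite /p [x + _]addrC addrK.
  rewrite E1 dotvZr in c1.
  set e := gf (p m.+1) - gf x.
  have E3 : dotv (gf (p m.+1)) h = D + dotv e h by rewrite /e dotvBl /D; ring.
  rewrite E3 in c1.
  set k := (m%:R : R).
  have k0 : 0 <= k by rewrite ler0n.
  set a := L * (k + 1) / (2 * n).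
  have a0 : 0 < a by rewrite /a !divr_gt0 ?mulr_gt0 //; lra.
  have y1 := @dotv_young R d a e h a0.
  have y2 : norm2 e <= L ^+ 2 * ((k + 1) / n) ^+ 2 * N2.
    have := @lip_sq L _ _ L0 (lip (p m.+1) x); rewrite E2 norm2Z -natr1 -/k.
    by rewrite mulrA.
  have y3 : norm2 e / (4 * a) <= L ^+ 2 * ((k + 1) / n) ^+ 2 * N2 / (4 * a).
    by rewrite ler_pM2r // invr_gt0 mulr_gt0.
  have E4 : L ^+ 2 * ((k + 1) / n) ^+ 2 * N2 / (4 * a) = L * (k + 1) / (2 * n) * N2.
    rewrite /a; field; rewrite !lt0r_neq0 //; lra.
  have y4 : dotv e h <= L * (k + 1) / n * N2.
    have -> : L * (k + 1) / n * N2 = a * N2 + L * (k + 1) / (2 * n) * N2.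
      by rewrite /a; field; rewrite lt0r_neq0.
    rewrite -/N2 in y1; lra.
  have y5 : n^-1 * dotv e h <= n^-1 * (L * (k + 1) / n * N2).
    by rewrite ler_pM2l // invr_gt0.
  rewrite -natr1 -/k.
  have E5 : (k + 1) / n * D + L * N2 * ((k + 1) * (k + 1 + 1)) / (2 * n ^+ 2)
     = k / n * D + L * N2 * (k * (k + 1)) / (2 * n ^+ 2) + n^-1 * (D + 0)
       + n^-1 * (L * (k + 1) / n * N2).
    by field; rewrite lt0r_neq0.
  rewrite E5.
  have E6 : - n^-1 * (D + dotv e h) = - (n^-1 * D) - n^-1 * dotv e h by ring.
  rewrite E6 in c1.
  rewrite addr0.
  lra.
have := step N (leqnn N).
have -> : p N = y by rewrite /p /n divff ?lt0r_neq0 // scale1r /h addrC subrK.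
have -> : N%:R / n = 1 by rewrite /n divff // lt0r_neq0.
have -> : L * N2 * (N%:R * (N%:R + 1)) / (2 * n ^+ 2) = L / 2 * N2 + L / 2 * N2 / N%:R.
  by rewrite -/n; field; rewrite lt0r_neq0.
lra.
Qed.
End Grad.

Lemma dotv_suml {R : realType} {d : nat} (I : Type) (r : seq I) (P : pred I) (u : I -> 'rV[R]_d) v :
  dotv (\sum_(i <- r | P i) u i) v = \sum_(i <- r | P i) dotv (u i) v.
Proof. exact: (big_morph (fun a => dotv a v) (fun a b => dotvDl a b v) (dotv0l v)). Qed.

Lemma grad_id (R : realType) (d n : nat) (H : {set 'I_n}) (Ls : 'I_n -> 'rV[R]_d -> R)
  (gL : 'I_n -> 'rV[R]_d -> 'rV[R]_d) (gf : 'rV[R]_d -> 'rV[R]_d) :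
  (forall i, i \in H -> is_gradient (Ls i) (gL i)) ->
  is_gradient (fun w => (#|H|%:R)^-1 * \sum_(i in H) Ls i w) gf ->
  forall w, gf w = avgS H (fun i => gL i w).
Proof.
move=> hi hf w.
set c := (#|H|%:R : R)^-1.
have key : forall v, is_derive w v (\sum_(i in H) Ls i) (\sum_(i in H) dotv (gL i w) v).
  move=> v; apply: (big_rec2 (fun F dF => is_derive w v F dF)).
    exact: is_derive_cst.
  move=> i F dF iH dF0.
  apply: is_deriveD => //.
  have [di dd] := hi i iH w.
  apply: DeriveDef; first exact: diff_derivable.
  by rewrite deriveE // dd.
have eqf : (fun w => c * \sum_(i in H) Ls i w) = c \*: (\sum_(i in H) Ls i).
  by apply/funext => u /=; rewrite fct_sumE.
have [df dd] := hf w.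
have E : forall v, dotv (gf w) v = dotv (avgS H (fun i => gL i w)) v.
  move=> v; rewrite -dd -deriveE // eqf.
  have K := @is_deriveZ _ _ _ _ c w v _ (key v).
  rewrite derive_val /avgS dotvZl dotv_suml //.
have : norm2 (gf w - avgS H (fun i => gL i w)) = 0.
  by rewrite /norm2 dotvBl !E subrr.
by move/norm2_eq0/eqP; rewrite subr_eq0 => /eqP.
Qed.

Section FGM.
Variables (R : realType) (d : nat) (f : 'rV[R]_d -> R) (gf : 'rV[R]_d -> 'rV[R]_d).
Variables (mu L dl : R) (g : nat -> 'rV[R]_d) (gamma : nat -> R) (x y z : nat -> 'rV[R]_d).
Hypothesis mu0 : 0 < mu.
Hypothesis L0 : 0 < L.
Hypothesis dl0 : 0 <= dl.
Hypothesis low : forall a b, f a + dotv (gf a) (b - a) + mu / 2 * norm2 (b - a) <= f b.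
Hypothesis up : forall a b, f b <= f a + dotv (gf a) (b - a) + L / 2 * norm2 (b - a).
Hypothesis err : forall k, norm2 (g k - gf (x k)) <= dl.
Let Gam := fun k => \sum_(i < k.+1) gamma i.
Hypothesis g00 : gamma 0%N = 1.
Hypothesis gpos : forall k, 0 < gamma k.+1.
Hypothesis grec : forall k, 2 * L + mu / 2 * Gam k = 2 * L * gamma k.+1 ^+ 2 / Gam k.+1.
Hypothesis hy : forall k, y k = x k - (2 * L)^-1 *: g k.
Let psi := fun k w => L * norm2 (w - x 0%N)
        + \sum_(i < k.+1) gamma i * (dotv (g i) (w - x i) + mu / 4 * norm2 (w - x i)).
Hypothesis hz : forall k w, psi k (z k) <= psi k w.
Hypothesis hx : forall k, x k.+1 = (1 - gamma k.+1 / Gam k.+1) *: y k + (gamma k.+1 / Gam k.+1) *: z k.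

Lemma oracle_low k w :
  f (x k) + dotv (g k) (w - x k) + mu / 4 * norm2 (w - x k) - dl / mu <= f w.
Proof.
have h1 := low (x k) w.
set e := g k - gf (x k).
have E : dotv (g k) (w - x k) = dotv (gf (x k)) (w - x k) + dotv e (w - x k).
  by rewrite /e dotvBl; ring.
have m4 : 0 < mu / 4 by rewrite divr_gt0.
have y1 := @dotv_young _ _ _ e (w - x k) m4.
have E2 : norm2 e / (4 * (mu / 4)) = norm2 e / mu by congr (_ / _); field.
rewrite E2 in y1.
have y2 : norm2 e / mu <= dl / mu by rewrite ler_pM2r ?invr_gt0 // err.
have n0 := norm2_ge0 (w - x k).
rewrite E; lra.
Qed.

Lemma oracle_up k : f (y k) <= f (x k) - norm2 (g k) / (4 * L) + dl / (2 * L).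
Proof.
have h1 := up (x k) (y k).
have E1 : y k - x k = (- (2 * L)^-1) *: g k by rewrite hy scaleNr addrAC subrr add0r.
rewrite E1 dotvZr norm2Z in h1.
set e := g k - gf (x k) in h1 *.
have E : dotv (gf (x k)) (g k) = norm2 (g k) - dotv e (g k).
  by rewrite /e /norm2 dotvBl; ring.
rewrite E in h1.
have q : (0 : R) < 1 / 4 by [].
have y1 := @dotv_young _ _ _ e (g k) q.
have y2 : norm2 e <= dl := err k.
set G2 := norm2 (g k) in h1 y1 *.
set DE := dotv e (g k) in h1 y1 *.
have E3 : norm2 e / (4 * (1 / 4)) = norm2 e by field.
rewrite E3 in y1.
have Li : 0 < (2 * L)^-1 by rewrite invr_gt0 mulr_gt0.
have : (2 * L)^-1 * DE <= (2 * L)^-1 * (1 / 4 * G2 + dl) by rewrite ler_pM2l //; lra.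
have E4 : f (x k) + - (2 * L)^-1 * (G2 - DE) + L / 2 * ((- (2 * L)^-1) ^+ 2 * G2)
   = f (x k) - 3 / (8 * L) * G2 + (2 * L)^-1 * DE.
  by field; rewrite lt0r_neq0.
have E5 : f (x k) - G2 / (4 * L) + dl / (2 * L)
   = f (x k) - 3 / (8 * L) * G2 + (2 * L)^-1 * (1 / 4 * G2 + dl).
  by field; rewrite lt0r_neq0.
rewrite E5; rewrite E4 in h1; lra.
Qed.

Lemma gamma_ge0 i : 0 <= gamma i.
Proof. by case: i => [|i]; [rewrite g00 | exact: ltW]. Qed.

Lemma GamS k : Gam k.+1 = Gam k + gamma k.+1.
Proof. by rewrite /Gam big_ord_recr. Qed.

Lemma Gam_pos k : 0 < Gam k.
Proof.
elim: k => [|k IH]; first by rewrite /Gam big_ord1 g00.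
by rewrite GamS addr_gt0.
Qed.

Definition U k v := (2 * L) *: (v - x 0%N)
  + \sum_(i < k.+1) (gamma i *: (g i + (mu / 2) *: (v - x i))).

Lemma pterm (w v p : 'rV[R]_d) :
  norm2 (w - p) = norm2 (v - p) + norm2 (w - v) + 2 * dotv (v - p) (w - v).
Proof.
have -> : w - p = (w - v) + (v - p) by rewrite addrA subrK.
by rewrite norm2D (dotvC (w - v)); ring.
Qed.

Lemma dterm (q w v p : 'rV[R]_d) : dotv q (w - p) = dotv q (v - p) + dotv q (w - v).
Proof. by rewrite !dotvBr; ring. Qed.

Lemma psi_diff k w v :
  psi k w - psi k v = (L + mu / 4 * Gam k) * norm2 (w - v) + dotv (U k v) (w - v).
Proof.
rewrite /psi /U.
have -> : forall A B C D : R, A + B - (C + D) = (A - C) + (B - D) by move=> *; ring.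
rewrite -sumrB.
have -> : \sum_(i < k.+1) (gamma i * (dotv (g i) (w - x i) + mu / 4 * norm2 (w - x i)) -
     gamma i * (dotv (g i) (v - x i) + mu / 4 * norm2 (v - x i)))
  = \sum_(i < k.+1) (mu / 4 * norm2 (w - v) * gamma i + dotv (gamma i *: (g i + (mu / 2) *: (v - x i))) (w - v)).
  apply: eq_bigr => i _.
  rewrite dotvZl dotvDl dotvZl (pterm w v (x i)) (dterm (g i) w v (x i)); by field.
rewrite big_split /= -mulr_sumr -dotv_suml dotvDl dotvZl (pterm w v (x 0%N)) /Gam.
ring.
Qed.

Lemma psi_min k v : psi k (z k) + (L + mu / 4 * Gam k) * norm2 (v - z k) <= psi k v.
Proof.
set a := L + mu / 4 * Gam k.
have a0 : 0 < a by rewrite /a addr_gt0 // mulr_gt0 ?divr_gt0 ?Gam_pos.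
suff U0 : U k (z k) = 0.
  by have := psi_diff k v (z k); rewrite U0 dotv0l addr0 -/a; lra.
apply: norm2_eq0.
set u := U k (z k).
have := psi_diff k (z k - (2 * a)^-1 *: u) (z k).
have E0 : z k - (2 * a)^-1 *: u - z k = - ((2 * a)^-1 *: u) by rewrite addrAC subrr add0r.
rewrite -/a -/u E0 norm2N norm2Z dotvNr dotvZr -/(norm2 u).
have := hz k (z k - (2 * a)^-1 *: u).
have := norm2_ge0 u.
set Nu := norm2 u => N0 h1 h2.
have E : a * ((2 * a)^-1 ^+ 2 * Nu) + - ((2 * a)^-1 * Nu) = - (Nu / (4 * a)).
  by field; rewrite lt0r_neq0.
rewrite E in h2.
have : 0 <= Nu / (4 * a) by rewrite divr_ge0 // mulr_ge0 // ltW.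
have : Nu / (4 * a) <= 0 by lra.
move=> h3 h4.
have : Nu / (4 * a) = 0 by apply/eqP; rewrite eq_le h3 h4.
move/eqP; rewrite mulf_eq0 invr_eq0 => /orP [/eqP //|].
have a4 : 4 * a != 0 by rewrite lt0r_neq0 // mulr_gt0.
by rewrite (negbTE a4).
Qed.

Let D := dl / mu + dl / (2 * L).
Let P := fun k => psi k (z k) + \sum_(i < k.+1) gamma i * f (x i).
Let S := fun k => \sum_(i < k.+1) Gam i.

Lemma psiS k w : psi k.+1 w = psi k w
   + gamma k.+1 * (dotv (g k.+1) (w - x k.+1) + mu / 4 * norm2 (w - x k.+1)).
Proof. by rewrite /psi big_ord_recr /= addrA. Qed.

Lemma recE k : L * gamma k.+1 ^+ 2 = Gam k.+1 * (L + mu / 4 * Gam k).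
Proof.
have := grec k; have G0 := Gam_pos k.+1.
move=> h; apply: (mulfI (x:=2 * (Gam k.+1)^-1)).
  by rewrite mulf_neq0 // invr_eq0 lt0r_neq0.
have -> : 2 * (Gam k.+1)^-1 * (Gam k.+1 * (L + mu / 4 * Gam k)) = 2 * L + mu / 2 * Gam k.
  by field; rewrite lt0r_neq0.
rewrite h; field; exact: lt0r_neq0.
Qed.

Lemma main_ind k : Gam k * f (y k) <= P k + D * S k.
Proof.
have dmu : 0 <= dl / mu by rewrite divr_ge0 // ltW.
have dL : 0 <= dl / (2 * L) by rewrite divr_ge0 // mulr_ge0 // ltW.
elim: k => [|k IH].
  rewrite /P /S /Gam /psi !big_ord1 g00 !mul1r.
  have u0 := oracle_up 0.
  set h := z 0%N - x 0%N.
  have yg := @dotv_young _ _ L (- g 0%N) h L0.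
  rewrite dotvNl norm2N in yg.
  have := norm2_ge0 h.
  have : 0 <= mu / 4 * norm2 h by rewrite mulr_ge0 ?norm2_ge0 // divr_ge0 // ltW.
  rewrite /D; lra.
set G := Gam k; set G' := Gam k.+1; set ga := gamma k.+1.
have GG : G' = G + ga by rewrite /G' GamS.
have G0 : 0 < G := Gam_pos k.
have ga0 : 0 < ga := gpos k.
set a := L + mu / 4 * G.
have a0 : 0 < a by rewrite /a addr_gt0 // mulr_gt0 // divr_gt0.
have rE : L * ga ^+ 2 = G' * a := recE k.
set w := z k.+1; set hh := w - z k.
have i1 := psi_min k w.
rewrite -/G -/a -/hh in i1.
have i3 := oracle_low k.+1 (y k).
have i3' : G * (f (x k.+1) + dotv (g k.+1) (y k - x k.+1) - dl / mu) <= G * f (y k).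
  rewrite ler_pM2l //.
  have : 0 <= mu / 4 * norm2 (y k - x k.+1) by rewrite mulr_ge0 ?norm2_ge0 // divr_ge0 // ltW.
  lra.
have i5 : G * dotv (g k.+1) (y k - x k.+1) + ga * dotv (g k.+1) (w - x k.+1)
          = ga * dotv (g k.+1) hh.
  rewrite /hh hx -/G' -/ga !dotvBr !dotvDr !dotvZr GG.
  by field; rewrite lt0r_neq0 // addr_gt0.
have yg := @dotv_young _ _ a (- (ga *: g k.+1)) hh a0.
rewrite dotvNl norm2N norm2Z dotvZl in yg.
have E6 : ga ^+ 2 * norm2 (g k.+1) / (4 * a) = G' * (norm2 (g k.+1) / (4 * L)).
  have -> : ga ^+ 2 = G' * a / L by rewrite -rE; field; rewrite lt0r_neq0.
  by field; rewrite !lt0r_neq0.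
rewrite E6 in yg.
have i7 := oracle_up k.+1.
have i7' : G' * f (y k.+1) <= G' * (f (x k.+1) - norm2 (g k.+1) / (4 * L) + dl / (2 * L)).
  by rewrite ler_pM2l // GG addr_gt0.
have i8 : 0 <= ga * (mu / 4 * norm2 (w - x k.+1)).
  by rewrite mulr_ge0 ?mulr_ge0 ?norm2_ge0 // ?divr_ge0 // ltW.
have PS : P k.+1 = psi k w + ga * (dotv (g k.+1) (w - x k.+1) + mu / 4 * norm2 (w - x k.+1))
            + (\sum_(i < k.+1) gamma i * f (x i)) + ga * f (x k.+1).
  by rewrite /P psiS big_ord_recr /= addrA.
have SS : S k.+1 = S k + G' by rewrite /S big_ord_recr.
rewrite PS SS.
rewrite /P -/G in IH.
have EE : G * (f (x k.+1) + dotv (g k.+1) (y k - x k.+1) - dl / mu)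
   = G * f (x k.+1) + G * dotv (g k.+1) (y k - x k.+1) - G * (dl / mu) by ring.
rewrite EE in i3'.
have EE2 : G' * (f (x k.+1) - norm2 (g k.+1) / (4 * L) + dl / (2 * L))
   = (G + ga) * f (x k.+1) - G' * (norm2 (g k.+1) / (4 * L)) + G' * (dl / (2 * L)).
  by rewrite GG; ring.
rewrite EE2 in i7'.
have EE3 : ga * (dotv (g k.+1) (w - x k.+1) + mu / 4 * norm2 (w - x k.+1))
   = ga * dotv (g k.+1) (w - x k.+1) + ga * (mu / 4 * norm2 (w - x k.+1)) by ring.
rewrite EE3.
have Dbound : G * (dl / mu) + G' * (dl / (2 * L)) <= D * G'.
  rewrite /D GG.
  have : G * (dl / mu) <= (G + ga) * (dl / mu) by rewrite ler_wpM2r // lerDl ltW.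
  lra.
have EE4 : (G + ga) * f (x k.+1) = G * f (x k.+1) + ga * f (x k.+1) by ring.
rewrite EE4 in i7'.
have EE5 : D * (S k + G') = D * S k + D * G' by ring.
rewrite EE5.
have E7 : - (ga * dotv (g k.+1) hh) <= a * norm2 hh + G' * (norm2 (g k.+1) / (4 * L)).
  by rewrite -mulrN; move: yg; rewrite mulrN.
lra.
Qed.

Lemma final_bound k xs :
  Gam k * (f (y k) - f xs) <= L * norm2 (xs - x 0%N) + Gam k * (dl / mu) + D * S k.
Proof.
have h1 := main_ind k.
have h2 := hz k xs.
have h3 : \sum_(i < k.+1) gamma i * (dotv (g i) (xs - x i) + mu / 4 * norm2 (xs - x i))
   + \sum_(i < k.+1) gamma i * f (x i) <= Gam k * (f xs + dl / mu).
  rewrite -big_split /= /Gam mulr_suml; apply: ler_sum => i _.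
  rewrite -mulrDr; apply: ler_wpM2l; first exact: gamma_ge0.
  have := oracle_low i xs; lra.
rewrite /P /psi in h1 h2 h3 *.
have E : Gam k * (f (y k) - f xs) = Gam k * f (y k) - Gam k * f xs by ring.
have E2 : Gam k * (f xs + dl / mu) = Gam k * f xs + Gam k * (dl / mu) by ring.
rewrite E2 in h3.
rewrite E.
lra.
Qed.

Lemma gam_step k s : 0 < s -> s ^+ 2 = L / mu -> Gam k <= 2 * s * gamma k.+1.
Proof.
move=> s0 s2.
have rE := recE k.
have G0 := Gam_pos k; have ga0 := gpos k.
have GG : Gam k.+1 = Gam k + gamma k.+1 := GamS k.
set G := Gam k in rE G0 GG *; set G' := Gam k.+1 in rE GG *; set ga := gamma k.+1 in rE ga0 GG *.
have h1 : G * (mu / 4 * G) <= L * ga ^+ 2.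
  rewrite rE GG.
  have a4 : 0 <= mu / 4 * G by rewrite mulr_ge0 // ?divr_ge0 // ltW.
  have a5 : 0 <= ga * (L + mu / 4 * G) by apply: mulr_ge0; [exact: ltW|apply: addr_ge0 a4; exact: ltW].
  have -> : (G + ga) * (L + mu / 4 * G) = G * (mu / 4 * G) + (G * L + ga * (L + mu / 4 * G)) by ring.
  by rewrite lerDl addr_ge0 // mulr_ge0 // ltW.
have h2 : G ^+ 2 <= (2 * s * ga) ^+ 2.
  have -> : (2 * s * ga) ^+ 2 = 4 * (L / mu) * ga ^+ 2 by rewrite -s2; ring.
  have -> : 4 * (L / mu) * ga ^+ 2 = 4 / mu * (L * ga ^+ 2) by field; rewrite lt0r_neq0.
  have -> : G ^+ 2 = 4 / mu * (G * (mu / 4 * G)) by field; rewrite lt0r_neq0.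
  by rewrite ler_pM2l // divr_gt0.
have : 0 < 2 * s * ga by rewrite !mulr_gt0.
nra.
Qed.

Lemma S_bound k s : 0 < s -> s ^+ 2 = L / mu -> S k <= (1 + 2 * s) * Gam k.
Proof.
move=> s0 s2; elim: k => [|k IH].
  rewrite /S big_ord1; have := Gam_pos 0; nra.
rewrite /S big_ord_recr /= -/(S k) GamS.
have := gam_step k s s0 s2; have := Gam_pos k.
nra.
Qed.

Lemma Gam_growth k s : 0 < s -> s ^+ 2 = L / mu -> (1 + (2 * s)^-1) ^+ k <= Gam k.
Proof.
move=> s0 s2; elim: k => [|k IH].
  by rewrite expr0 /Gam big_ord1 g00.
rewrite GamS exprS.
have h := gam_step k s s0 s2.
have h' : (2 * s)^-1 * Gam k <= gamma k.+1.
  by rewrite mulrC ler_pdivrMr ?mulr_gt0 // mulrC.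
have : 0 <= 1 + (2 * s)^-1 by rewrite addr_ge0 // invr_ge0 mulr_ge0 // ltW.
move=> c0.
have : (1 + (2 * s)^-1) * (1 + (2 * s)^-1) ^+ k <= (1 + (2 * s)^-1) * Gam k by rewrite ler_wpM2l.
nra.
Qed.
End FGM.

Lemma err_bound (R : realType) (d n f : nat) (B : {set 'I_n}) (gL : 'I_n -> 'rV[R]_d)
  (inp : 'I_n -> 'rV[R]_d) (F : ('I_n -> 'rV[R]_d) -> 'rV[R]_d) (nu G K : R) :
  #|B| = f -> (forall i, i \notin B -> inp i = gL i) -> robust_agg n f nu F ->
  (#|~: B|%:R)^-1 * \sum_(i in ~: B) norm2 (gL i - avgS (~: B) gL) <= G ^+ 2 ->
  nu <= K -> 0 <= K ->
  norm2 (F inp - avgS (~: B) gL) <= K * G ^+ 2.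
Proof.
move=> hB hin hrob hhet hnuK K0.
have cH : #|~: B| = (n - f)%N.
  by have := cardsC B; rewrite hB => E; rewrite -[in RHS](card_ord n) -E addKn.
have eqa : avgS (~: B) inp = avgS (~: B) gL.
  by rewrite /avgS; congr (_ *: _); apply: eq_bigr => i; rewrite !inE => /hin.
have := hrob inp (~: B) cH; rewrite eqa.
have -> : \sum_(i in ~: B) norm2 (inp i - avgS (~: B) gL) = \sum_(i in ~: B) norm2 (gL i - avgS (~: B) gL).
  by apply: eq_bigr => i; rewrite !inE => /hin ->.
set V := _ * _ in hhet *.
have V0 : 0 <= V by rewrite /V mulr_ge0 ?invr_ge0 ?ler0n // sumr_ge0 // => i _; exact: norm2_ge0.
have G0 : 0 <= G ^+ 2 := sqr_ge0 G.
move=> h; apply: le_trans h _.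
case: (lerP 0 nu) => nu0.
  apply: le_trans (_ : nu * G ^+ 2 <= _); first by rewrite ler_wpM2l.
  by rewrite ler_wpM2r.
have : nu * V <= 0 by rewrite mulr_le0_ge0 // ltW.
have : 0 <= K * G ^+ 2 by rewrite mulr_ge0.
lra.
Qed.
Theorem mainTheorem3 (R : realType) (C0 : R) (hC0 : 0 < C0) :
  exists c C : R, 0 < c /\ 0 < C /\
  forall (d n f : nat) (B : {set 'I_n})
    (Ls : 'I_n -> 'rV[R]_d -> R) (gL : 'I_n -> 'rV[R]_d -> 'rV[R]_d)
    (G mu L nu : R) (xstar : 'rV[R]_d)
    (F : ('I_n -> 'rV[R]_d) -> 'rV[R]_d)
    (gamma : nat -> R) (x y z : nat -> 'rV[R]_d)
    (inputs : nat -> 'I_n -> 'rV[R]_d),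
    (2 * f < n)%N ->
    #|B| = f ->
    (* honest losses are differentiable with gradients gL i *)
    (forall i, i \notin B -> is_gradient (Ls i) (gL i)) ->
    let H := ~: B in
    let LH := fun w => (#|H|%:R)^-1 * \sum_(i in H) Ls i w in
    let gLH := fun w => avgS H (fun i => gL i w) in
    (* (G,0)-heterogeneity *)
    (forall w, (#|H|%:R)^-1 * \sum_(i in H) norm2 (gL i w - gLH w) <= G ^+ 2) ->
    0 < mu -> 0 < L ->
    strongly_convex mu LH ->
    Lsmooth L LH ->
    (forall w, LH xstar <= LH w) ->
    robust_agg n f nu F ->
    nu <= C0 * ((f%:R : R) / (n - 2 * f)%N%:R) ->
    (* fast gradient method with oracle g(x_k) = F(g_1,...,g_n) *)
    (forall k i, i \notin B -> inputs k i = gL i (x k)) ->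
    let g := fun k => F (inputs k) in
    let Gam := fun k => \sum_(i < k.+1) gamma i in
    gamma 0%N = 1 ->
    (forall k, 0 < gamma k.+1) ->
    (forall k, 2 * L + mu / 2 * Gam k = 2 * L * gamma k.+1 ^+ 2 / Gam k.+1) ->
    (forall k, y k = x k - (2 * L)^-1 *: g k) ->
    (forall k w,
        L * norm2 (z k - x 0%N)
        + \sum_(i < k.+1) gamma i * (dotv (g i) (z k - x i) + mu / 4 * norm2 (z k - x i))
      <= L * norm2 (w - x 0%N)
        + \sum_(i < k.+1) gamma i * (dotv (g i) (w - x i) + mu / 4 * norm2 (w - x i))) ->
    (forall k, x k.+1 = (1 - gamma k.+1 / Gam k.+1) *: y k + (gamma k.+1 / Gam k.+1) *: z k) ->
    forall (eps : R) (k : nat), 0 < eps ->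
      c * Num.sqrt (L / mu) * (1 + logp (L * norm2 (x 0%N - xstar) / eps)) <= k%:R ->
      LH (y k) - LH xstar <=
        eps + C * (Num.sqrt (L / mu) / mu) * ((f%:R : R) / (n - 2 * f)%N%:R) * G ^+ 2.
Proof.
exists 3, (6 * C0); split; first by [].
split; first by rewrite mulr_gt0.
move=> d n f B Ls gL G mu L nu xstar F gamma x y z inputs h2f hB hgrad H LH gLH
  hhet mu0 L0 hsc [gf [hgf hlip]] hmin hrob hnu hin g Gam g00 gpos grec hy hz hx
  eps k eps0 hk.
set rho := (f%:R : R) / (n - 2 * f)%N%:R in hnu *.
have rho0 : 0 <= rho by rewrite divr_ge0 ?ler0n.
set dl := C0 * rho * G ^+ 2.
have dl0 : 0 <= dl by rewrite mulr_ge0 ?sqr_ge0 // mulr_ge0 // ltW.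
have gfE : forall w, gf w = gLH w.
  apply: (@grad_id R d n H Ls gL gf) => //.
  by move=> i; rewrite inE => /hgrad.
have low := @grad_sc _ _ _ _ hgf _ (ltW mu0) hsc.
have up := @descent _ _ _ _ hgf _ _ (ltW mu0) hsc L0 hlip.
have err : forall k, norm2 (g k - gf (x k)) <= dl.
  move=> j; rewrite gfE /gLH /g.
  apply: (@err_bound R d n f B (fun i => gL i (x j)) (inputs j) F nu G (C0 * rho) hB) => //.
  - by move=> i /(hin j i).
  - by rewrite mulr_ge0 // ltW.
have fb := @final_bound _ _ _ _ _ _ _ _ _ _ _ _ mu0 L0 dl0 low up err g00 gpos grec hy hz hx k xstar.
have rhs0 : 0 <= 6 * C0 * (Num.sqrt (L / mu) / mu) * rho * G ^+ 2.
  apply: mulr_ge0; last exact: sqr_ge0.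
  apply: mulr_ge0 => //; apply: mulr_ge0; first by rewrite mulr_ge0 // ltW.
  by rewrite divr_ge0 ?sqrtr_ge0 // ltW.
have [d0|dpos] := eqVneq d 0%N.
  subst d; rewrite [y k]thinmx0 [xstar]thinmx0 subrr.
  by apply: addr_ge0 => //; exact: ltW.
have muL : mu <= L.
  pose v : 'rV[R]_d := const_mx 1.
  have nv : norm2 v = d%:R.
    rewrite /norm2 /dotv (eq_bigr (fun _ => 1)); last by move=> j _; rewrite /v !mxE mulr1.
    by rewrite sumr_const card_ord.
  have := low 0 v; have := up 0 v.
  rewrite subr0 nv => h1 h2.
  have dp : (0 : R) < d%:R by rewrite ltr0n lt0n.
  have : mu / 2 * d%:R <= L / 2 * d%:R by lra.
  by rewrite ler_pM2r // ler_pM2r.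
set s := Num.sqrt (L / mu) in hk rhs0 *.
have s2 : s ^+ 2 = L / mu by rewrite sqr_sqrtr // divr_ge0 // ltW.
have sge0 : 0 <= s by exact: sqrtr_ge0.
have s1 : 1 <= s.
  have : 1 <= s ^+ 2 by rewrite s2 ler_pdivlMr // mul1r.
  nra.
have s0 : 0 < s by apply: lt_le_trans s1.
have Sb := @S_bound _ _ _ _ mu0 L0 g00 gpos grec k s s0 s2.
have Gg := @Gam_growth _ _ _ _ mu0 L0 g00 gpos grec k s s0 s2.
have Gp := @Gam_pos _ gamma g00 gpos k.
set GK := \sum_(i < k.+1) gamma i in fb Gg Gp Sb.
set SK := \sum_(i < k.+1) \sum_(i0 < i.+1) gamma i0 in fb Sb.
set T := L * norm2 (x 0%N - xstar) / eps in hk.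
have T0 : 0 <= T by rewrite /T divr_ge0 ?mulr_ge0 ?norm2_ge0 // ltW.
have LR : L * norm2 (xstar - x 0%N) = T * eps.
  by rewrite norm2_sym /T; field; rewrite lt0r_neq0.
have TG : T <= GK.
  have [Tz|Tp] := eqVneq T 0; first by rewrite Tz ltW.
  have Tpos : 0 < T by rewrite lt0r Tp T0.
  set u := (2 * s + 1)^-1.
  have u0 : 0 < u by rewrite invr_gt0; lra.
  have u1 : u < 1 by rewrite invf_lt1; lra.
  have r1 : expR u <= 1 + (2 * s)^-1.
    have e1 := expR_ge1Dx (- u).
    rewrite expRN in e1.
    have -> : 1 + (2 * s)^-1 = (1 - u)^-1.
      by rewrite /u; field; apply/and3P; split; apply: lt0r_neq0; lra.
    by rewrite -lef_pV2 ?posrE ?invr_gt0 ?expR_gt0 ?subr_gt0 // invrK.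
  have r2 : expR u ^+ k <= (1 + (2 * s)^-1) ^+ k.
    have q0 : 0 <= (2 * s)^-1 by rewrite invr_ge0; lra.
    apply: lerXn2r => //; rewrite nnegrE; [exact: ltW (expR_gt0 _) | lra].
  rewrite -expRM_natl in r2.
  have lT : ln T <= logp T by rewrite /logp le_max lexx.
  have lT0 : 0 <= logp T by rewrite /logp le_max lexx orbT.
  have u3 : (3 * s)^-1 <= u by rewrite /u lef_pV2 ?posrE; lra.
  have k1 : 1 + logp T <= k%:R / (3 * s).
    by rewrite ler_pdivlMr ?mulr_gt0 // mulrC.
  have k2 : k%:R / (3 * s) <= k%:R * u by rewrite ler_wpM2l ?ler0n.
  have k3 : ln T <= k%:R * u by lra.
  have : T <= expR (k%:R * u) by rewrite -[X in X <= _](lnK (Tpos : T \is Num.pos)) ler_expR.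
  lra.
have LRe : L * norm2 (xstar - x 0%N) <= GK * eps by rewrite LR ler_wpM2r // ltW.
set D := dl / mu + dl / (2 * L) in fb.
have D0 : 0 <= D by rewrite /D addr_ge0 // divr_ge0 // ?mulr_ge0 // ltW.
have DS : D * SK <= D * ((1 + 2 * s) * GK) by rewrite ler_wpM2l.
set t := dl / mu in D D0 DS fb.
have t0 : 0 <= t by rewrite /t divr_ge0 // ltW.
have Dt : D <= t + t / 2.
  rewrite /D; have -> : dl / (2 * L) = t * (mu / (2 * L)) by rewrite /t; field; rewrite (lt0r_neq0 L0) (lt0r_neq0 mu0).
  have : mu / (2 * L) <= 1 / 2 by rewrite ler_pdivrMr ?mulr_gt0 //; lra.
  nra.
have errb : t + D * (1 + 2 * s) <= 6 * C0 * (s / mu) * rho * G ^+ 2.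
  have -> : 6 * C0 * (s / mu) * rho * G ^+ 2 = 6 * s * t by rewrite /t /dl; field; rewrite lt0r_neq0.
  nra.
have main : GK * (LH (y k) - LH xstar) <= GK * (eps + (t + D * (1 + 2 * s))).
  have -> : GK * (eps + (t + D * (1 + 2 * s))) = GK * eps + GK * t + D * ((1 + 2 * s) * GK) by ring.
  lra.
rewrite ler_pM2l // in main.
lra.
Qed.
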